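(* For every $1<p<\infty$ there exists an Orlicz function $\Phi_p$ on $[0,\infty)$ such that $C_{\Phi_p}^\infty\cong\{t^p\}$ and $E_{\Phi_p}^\infty\not\equiv\{t^p\}$.
   Context: An Orlicz function is an increasing convex function $F$ on $[0,\infty)$ with $F(0)=0$ and $\lim_{t\to\infty}F(t)=\infty$. For an Orlicz function $F$ and $A>0$, let $E_{F,A}^\infty$ be the closure in $C[0,1]$ of the set of functions $\{x\mapsto F(xy)/F(y):\ y>A\}$ (on $[0,1]$); set $E_F^\infty:=\bigcap_{A>0}E_{F,A}^\infty$ and $C_F^\infty:=\overline{\mathrm{conv}\,E_F^\infty}$ (closure in $C[0,1]$ of the convex hull). For a set $S$ of functions on $[0,1]$ and a function $\varphi$ on $[0,1]$, write $S\cong\{\varphi\}$ if for every $H\in S$ there is $C=C(H)>0$ with $C^{-1}\varphi(t)\le H(t)\le C\varphi(t)$ for all $0<t\le 1$; write $S\equiv\{\varphi\}$ if one constant $C$ works for all $H\in S$. *)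

(* Defs.v *)
From Stdlib Require Import Reals List.
Import ListNotations.
Open Scope R_scope.

(* Orlicz function: increasing (strictly) convex function on [0,oo),
   F(0)=0, F(t) -> oo.  Values of F on negative reals are irrelevant. *)
Definition Orlicz (F : R -> R) : Prop :=
  F 0 = 0 /\
  (forall s t, 0 <= s -> s < t -> F s < F t) /\
  (forall s t l, 0 <= s -> 0 <= t -> 0 <= l <= 1 ->
     F (l * s + (1 - l) * t) <= l * F s + (1 - l) * F t) /\
  (forall M, exists T, forall t, T <= t -> M <= F t).

(* Sets of functions on [0,1], represented as predicates on R -> R
   (values outside [0,1] are irrelevant). *)
Definition fset := (R -> R) -> Prop.

Definition cont01 (H : R -> R) : Prop :=
  forall x, 0 <= x <= 1 -> forall eps, 0 < eps -> exists delta, 0 < delta /\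
    forall y, 0 <= y <= 1 -> Rabs (y - x) < delta -> Rabs (H y - H x) < eps.

Definition closureC01 (S : fset) : fset := fun H =>
  cont01 H /\
  forall eps, 0 < eps -> exists g, S g /\
    forall x, 0 <= x <= 1 -> Rabs (H x - g x) <= eps.

Definition conv_hull (S : fset) : fset := fun H =>
  exists l : list (R * (R -> R)),
    Forall (fun c => 0 <= fst c /\ S (snd c)) l /\
    fold_right (fun c acc => fst c + acc) 0 l = 1 /\
    forall x, H x = fold_right (fun c acc => fst c * snd c x + acc) 0 l.

Definition E_FA (F : R -> R) (A : R) : fset :=
  closureC01 (fun g => exists y, A < y /\ g = (fun x => F (x * y) / F y)).

Definition E_F (F : R -> R) : fset := fun H => forall A, 0 < A -> E_FA F A H.

Definition C_F (F : R -> R) : fset := closureC01 (conv_hull (E_F F)).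

Definition fcong (S : fset) (phi : R -> R) : Prop :=
  forall H, S H -> exists C, 0 < C /\
    forall t, 0 < t <= 1 -> / C * phi t <= H t /\ H t <= C * phi t.

Definition fequiv (S : fset) (phi : R -> R) : Prop :=
  exists C, 0 < C /\ forall H, S H ->
    forall t, 0 < t <= 1 -> / C * phi t <= H t /\ H t <= C * phi t.

(* Main.v *)
Require Import Defs.
From Stdlib Require Import Reals Lra Lia Psatz List Classical ZArith.
Import ListNotations.
Open Scope R_scope.


Fixpoint sig (j:nat) : R := match j with O => 0 | S k => sig k + INR k + 1 end.
Fixpoint Lf (j:nat) : R := match j with O => 1 | S k => Lf k * (INR k + 2) end.
Definition line (j:nat) (s:R) := Lf j * (1 + s - sig j).
Fixpoint Mfin (N:nat) (s:R) : R :=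
  match N with O => Rmax 1 (line 0 s) | S k => Rmax (Mfin k s) (line (S k) s) end.
Definition Mf (s:R) := Mfin (Z.to_nat (up s)) s.

Lemma Lf_ge1 : forall j, 1 <= Lf j.
Proof. induction j; simpl. lra. pose proof (pos_INR j). nra. Qed.

Lemma sig_ge : forall j, INR j <= sig j.
Proof. induction j. simpl; lra. change (sig (S j)) with (sig j + INR j + 1). rewrite S_INR. pose proof (pos_INR j). lra. Qed.

Lemma sig_mono : forall i j, (i <= j)%nat -> sig i <= sig j.
Proof. intros i j H; induction H. lra. simpl. pose proof (pos_INR m). lra. Qed.

Lemma Mfin_ge1 : forall N s, 1 <= Mfin N s.
Proof. induction N; intros; simpl. apply Rmax_l. eapply Rle_trans; [apply IHN|apply Rmax_l]. Qed.

Lemma Mfin_ge : forall N j s, (j <= N)%nat -> line j s <= Mfin N s.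
Proof. induction N; intros j s H; simpl.
  - assert (j = 0%nat) by lia; subst; apply Rmax_r.
  - destruct (Nat.eq_dec j (S N)). subst; apply Rmax_r.
    eapply Rle_trans; [apply IHN; lia|apply Rmax_l]. Qed.

Lemma Mfin_attain : forall N s, Mfin N s = 1 \/ exists j, Mfin N s = line j s.
Proof. induction N; intros; simpl.
  - destruct (Rle_dec 1 (line 0 s)).
    rewrite Rmax_right by auto. eauto. rewrite Rmax_left by lra. auto.
  - destruct (Rle_dec (Mfin N s) (line (S N) s)).
    rewrite Rmax_right by auto. eauto. rewrite Rmax_left by lra. apply IHN. Qed.

Lemma Mfin_le : forall N s v, (forall j, (j <= N)%nat -> line j s <= v) -> 1 <= v -> Mfin N s <= v.
Proof. induction N; intros s v H H1; simpl; apply Rmax_lub; auto. Qed.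

Lemma IZR_le_INR_to_nat : forall z, IZR z <= INR (Z.to_nat z).
Proof. intro z. destruct (Z_le_gt_dec 0 z).
  rewrite INR_IZR_INZ, Z2Nat.id by lia. lra.
  destruct z; try lia. rewrite Z2Nat.inj_neg. simpl. apply IZR_le. lia. Qed.

Lemma line_big_neg : forall j s, (Z.to_nat (up s) < j)%nat -> line j s < 0.
Proof. intros j s H. unfold line. pose proof (archimed s) as [A _].
  pose proof (IZR_le_INR_to_nat (up s)). apply le_INR in H. rewrite S_INR in H.
  pose proof (sig_ge j). pose proof (Lf_ge1 j). nra. Qed.

Lemma M_ge1 : forall s, 1 <= Mf s.
Proof. intros; apply Mfin_ge1. Qed.

Lemma M_ge_line : forall j s, line j s <= Mf s.
Proof. intros j s. unfold Mf. destruct (le_lt_dec j (Z.to_nat (up s))).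
  apply Mfin_ge; auto. pose proof (line_big_neg j s l). pose proof (Mfin_ge1 (Z.to_nat (up s)) s). lra. Qed.

Lemma M_attain : forall s, Mf s = 1 \/ exists j, Mf s = line j s.
Proof. intros; apply Mfin_attain. Qed.

Lemma line_diff : forall k s, line (S k) s - line k s = Lf k * (INR k + 1) * (s - sig (S k)).
Proof. intros. unfold line. simpl. ring. Qed.

Lemma line_le_below : forall j k s, (k <= j)%nat -> sig j <= s -> line k s <= line j s.
Proof. induction j; intros k s Hk Hs.
  - assert (k = 0%nat) by lia; subst; lra.
  - destruct (Nat.eq_dec k (S j)). subst; lra.
    assert (sig j <= sig (S j)) by (apply sig_mono; lia).
    pose proof (IHj k s ltac:(lia) ltac:(lra)).
    pose proof (line_diff j s). pose proof (Lf_ge1 j). pose proof (pos_INR j).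
    assert (0 <= Lf j * (INR j + 1) * (s - sig (S j))).
    { apply Rmult_le_pos; nra. } lra. Qed.

Lemma line_le_above : forall j m s, s <= sig (S j) -> line (j + m) s <= line j s.
Proof. intros j m s Hs. induction m.
  - rewrite Nat.add_0_r; lra.
  - replace (j + S m)%nat with (S (j + m)) by lia.
    pose proof (line_diff (j+m) s). pose proof (Lf_ge1 (j+m)). pose proof (pos_INR (j+m)).
    assert (sig (S j) <= sig (S (j+m))) by (apply sig_mono; lia).
    assert (Lf (j+m) * (INR (j+m) + 1) * (s - sig (S (j+m))) <= 0).
    { assert (0 <= Lf (j+m) * (INR (j+m) + 1)) by nra. nra. } lra. Qed.

Lemma line_le_seg : forall j k s, sig j <= s <= sig (S j) -> line k s <= line j s.
Proof. intros j k s [H1 H2]. destruct (le_lt_dec k j).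
  apply line_le_below; auto.
  replace k with (j + (k - j))%nat by lia. apply line_le_above; auto. Qed.

Lemma M_seg : forall j s, sig j <= s <= sig (S j) -> Mf s = line j s.
Proof. intros j s H. apply Rle_antisym; [|apply M_ge_line].
  unfold Mf. apply Mfin_le. intros; apply line_le_seg; auto.
  unfold line. pose proof (Lf_ge1 j). nra. Qed.

Lemma M_mono : forall s s', s <= s' -> Mf s <= Mf s'.
Proof. intros s s' H. destruct (M_attain s) as [E|[j E]]; rewrite E.
  apply M_ge1. eapply Rle_trans; [|apply M_ge_line with (j:=j)].
  unfold line. pose proof (Lf_ge1 j). nra. Qed.

Lemma seg_exists : forall s, 0 <= s -> exists j, sig j <= s <= sig (S j).
Proof. intros s Hs.
  assert (forall n, s < sig n -> exists j, sig j <= s <= sig (S j)).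
  { induction n; intros H. simpl in H; lra.
    destruct (Rle_dec (sig n) s). exists n; lra. apply IHn; lra. }
  pose proof (archimed s) as [A _]. apply (H (S (Z.to_nat (up s)))).
  pose proof (IZR_le_INR_to_nat (up s)). pose proof (sig_ge (S (Z.to_nat (up s)))).
  rewrite S_INR in H1. lra. Qed.


Definition Phi (p t : R) := if Rle_dec t 0 then 0 else Rpower t p * Mf (p * ln t).

Lemma exp_mul_pos : forall a, 0 < exp a. Proof. apply exp_pos. Qed.

Lemma bern : forall p a, 1 <= p -> exp (p * a) >= 1 + p * (exp a - 1).
Proof. intros p a Hp.
  assert (E1 : exp (p*a) = exp a * exp ((p-1)*a)) by (rewrite <- exp_plus; f_equal; ring).
  assert (E2 : exp a * exp (-a) = 1) by (rewrite <- exp_plus; replace (a + -a) with 0 by ring; apply exp_0).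
  pose proof (exp_ineq1_le ((p-1)*a)). pose proof (exp_ineq1_le (-a)).
  pose proof (exp_pos a).
  assert (exp (p*a) >= exp a * (1 + (p-1)*a)) by (rewrite E1; apply Rle_ge, Rmult_le_compat_l; lra).
  assert ((p-1) * (exp a * exp (-a)) >= (p-1) * (exp a * (1 - a))).
  { apply Rle_ge, Rmult_le_compat_l. lra. apply Rmult_le_compat_l; lra. }
  rewrite E2 in H3.
  nra. Qed.

Lemma Psupp : forall p z t, 1 <= p -> 0 < z -> 0 < t ->
  Rpower t p >= Rpower z p + p * Rpower z p / z * (t - z).
Proof. intros p z t Hp Hz Ht. unfold Rpower.
  set (a := ln t - ln z).
  assert (Et : ln t = a + ln z) by (unfold a; ring).
  assert (Ea : exp a = t / z).
  { unfold a. unfold Rminus. rewrite exp_plus, exp_Ropp, !exp_ln by auto. field. lra. }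
  rewrite Et. replace (p * (a + ln z)) with (p*a + p * ln z) by ring. rewrite exp_plus.
  pose proof (bern p a Hp). rewrite Ea in H. pose proof (exp_pos (p * ln z)).
  set (E := exp (p * ln z)) in *. set (F := exp (p * a)) in *.
  assert (F * E >= (1 + p * (t / z - 1)) * E) by (apply Rle_ge, Rmult_le_compat_r; lra).
  replace (E + p * E / z * (t - z)) with ((1 + p * (t / z - 1)) * E) by (field; lra). lra. Qed.

Lemma Phi_pos : forall p t, 0 < t -> 0 < Phi p t.
Proof. intros p t Ht. unfold Phi. destruct Rle_dec. lra.
  apply Rmult_lt_0_compat. apply exp_pos. pose proof (M_ge1 (p * ln t)). lra. Qed.

Lemma Phi_ge_P : forall p t, 0 < t -> Rpower t p <= Phi p t.
Proof. intros p t Ht. unfold Phi. destruct Rle_dec. lra.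
  pose proof (M_ge1 (p * ln t)). pose proof (exp_pos (p * ln t)). unfold Rpower in *. nra. Qed.

Lemma Phi_ge_line : forall p j t, 0 < t -> Rpower t p * line j (p * ln t) <= Phi p t.
Proof. intros p j t Ht. unfold Phi. destruct Rle_dec. lra.
  pose proof (M_ge_line j (p * ln t)). pose proof (exp_pos (p * ln t)). unfold Rpower in *. nra. Qed.

Lemma ln_ineq : forall u u0, 0 < u -> 0 < u0 -> u * (ln u0 - ln u) <= u0 - u.
Proof. intros u u0 Hu Hu0. pose proof (exp_ineq1_le (ln u0 - ln u)).
  unfold Rminus in H at 2. rewrite exp_plus, exp_Ropp, !exp_ln in H by auto.
  assert (u * (1 + (ln u0 - ln u)) <= u * (u0 * / u)) by (apply Rmult_le_compat_l; lra).
  replace (u * (u0 * / u)) with u0 in H0 by (field; lra). lra. Qed.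

Lemma Phi_supp : forall p z, 1 <= p -> 0 < z -> exists k, forall t, 0 <= t ->
  Phi p z + k * (t - z) <= Phi p t.
Proof. intros p z Hp Hz.
  assert (Pz : Phi p z = Rpower z p * Mf (p * ln z)) by (unfold Phi; destruct Rle_dec; lra).
  assert (Phi0 : Phi p 0 = 0) by (unfold Phi; destruct Rle_dec; lra).
  pose proof (exp_pos (p * ln z)) as Hu0. change (exp (p * ln z)) with (Rpower z p) in Hu0.
  destruct (M_attain (p * ln z)) as [E|[j E]].
  - exists (p * Rpower z p / z). intros t Ht. rewrite Pz, E.
    destruct (Req_dec t 0). subst. rewrite Phi0.
    replace (Rpower z p * 1 + p * Rpower z p / z * (0 - z)) with (Rpower z p * (1 - p)) by (field; lra). nra.
    pose proof (Psupp p z t Hp Hz ltac:(lra)). pose proof (Phi_ge_P p t ltac:(lra)). lra.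
  - set (u0 := Rpower z p) in *. set (L := Lf j). set (c := 1 + p * ln z - sig j).
    assert (EL : Mf (p * ln z) = L * c) by (rewrite E; reflexivity).
    pose proof (M_ge1 (p * ln z)). pose proof (Lf_ge1 j). fold L in H0.
    assert (Hc : 0 < c) by nra.
    exists (L * (1 + c) * (p * u0 / z)). intros t Ht. rewrite Pz, EL.
    destruct (Req_dec t 0). subst. rewrite Phi0.
    assert (0 <= L * u0 * (c * (p - 1) + p)) by (apply Rmult_le_pos; nra).
    replace (u0 * (L * c) + L * (1 + c) * (p * u0 / z) * (0 - z)) with (- (L * u0 * (c * (p-1) + p)) - L*u0*c*0) by (field; lra). lra.
    assert (Ht' : 0 < t) by lra.
    pose proof (Phi_ge_line p j t Ht'). set (u := Rpower t p) in *.
    assert (Hu : 0 < u) by apply exp_pos.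
    assert (lnu : ln u = p * ln t) by (unfold u, Rpower; apply ln_exp).
    assert (lnu0 : ln u0 = p * ln z) by (unfold u0, Rpower; apply ln_exp).
    pose proof (ln_ineq u u0 Hu Hu0). rewrite lnu, lnu0 in H3.
    pose proof (Psupp p z t Hp Hz Ht'). fold u u0 in H4.
    unfold line in H2. fold L in H2.
    assert (S1 : u * (1 + p * ln t - sig j) >= u0 * c + (1 + c) * (u - u0)).
    { unfold c. nra. }
    assert (S2 : (1 + c) * (u - u0) >= (1 + c) * (p * u0 / z * (t - z))).
    { apply Rle_ge, Rmult_le_compat_l; lra. }
    assert (L * (u * (1 + p * ln t - sig j)) >= L * (u0 * c + (1 + c) * (p * u0 / z * (t - z)))).
    { apply Rle_ge, Rmult_le_compat_l; lra. }
    nra. Qed.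

Lemma Phi_convex : forall p s t l, 1 <= p -> 0 <= s -> 0 <= t -> 0 <= l <= 1 ->
  Phi p (l * s + (1 - l) * t) <= l * Phi p s + (1 - l) * Phi p t.
Proof. intros p s t l Hp Hs Ht Hl.
  assert (Phi0 : Phi p 0 = 0) by (unfold Phi; destruct Rle_dec; lra).
  assert (Pnn : forall x, 0 <= x -> 0 <= Phi p x).
  { intros x Hx. destruct (Req_dec x 0). subst; lra. pose proof (Phi_pos p x); lra. }
  set (z := l * s + (1 - l) * t).
  assert (0 <= z) by (unfold z; nra).
  destruct (Req_dec z 0). rewrite H0, Phi0. pose proof (Pnn s Hs). pose proof (Pnn t Ht). nra.
  destruct (Phi_supp p z Hp ltac:(lra)) as [k Hk].
  pose proof (Hk s Hs). pose proof (Hk t Ht).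
  assert (l * (Phi p z + k * (s - z)) + (1 - l) * (Phi p z + k * (t - z)) = Phi p z) by (unfold z; ring).
  assert (l * (Phi p z + k * (s - z)) <= l * Phi p s) by (apply Rmult_le_compat_l; lra).
  assert ((1-l) * (Phi p z + k * (t - z)) <= (1-l) * Phi p t) by (apply Rmult_le_compat_l; lra).
  lra. Qed.

Lemma Phi_orlicz : forall p, 1 < p -> Orlicz (Phi p).
Proof. intros p Hp. assert (Phi0 : Phi p 0 = 0) by (unfold Phi; destruct Rle_dec; lra).
  split; [auto|split;[|split]].
  - intros s t Hs Hst. pose proof (Phi_pos p t ltac:(lra)).
    destruct (Req_dec s 0). subst; lra.
    pose proof (Phi_convex p t 0 (s/t) ltac:(lra) ltac:(lra) ltac:(lra)).
    assert (0 <= s / t <= 1). { split. unfold Rdiv; apply Rmult_le_pos; [lra|left; apply Rinv_0_lt_compat; lra].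
      apply Rmult_le_reg_r with t. lra. field_simplify; lra. }
    specialize (H1 H2). replace (s / t * t + (1 - s / t) * 0) with s in H1 by (field; lra).
    rewrite Phi0 in H1. assert (s / t < 1). { apply Rmult_lt_reg_r with t. lra. field_simplify; lra. }
    nra.
  - intros; apply Phi_convex; lra.
  - intros M. exists (Rmax M 1). intros t Ht. pose proof (Rmax_l M 1). pose proof (Rmax_r M 1).
    pose proof (Phi_ge_P p t ltac:(lra)). pose proof (bern p (ln t) ltac:(lra)).
    unfold Rpower in H1. rewrite exp_ln in H2 by lra. nra. Qed.


Definition gy (p y : R) := fun x => Phi p (x * y) / Phi p y.
Definition ell (p D t : R) := Rmax 0 (1 + p * ln t / (1 + D)).

Lemma ln_le0 : forall t, 0 < t <= 1 -> ln t <= 0.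
Proof. intros t [H1 H2]. destruct (Req_dec t 1). subst; rewrite ln_1; lra.
  pose proof (ln_increasing t 1 H1 ltac:(lra)). rewrite ln_1 in H0; lra. Qed.

Lemma gy_eq : forall p y t, 0 < y -> 0 < t ->
  gy p y t = exp (p * ln t) * Mf (p * ln t + p * ln y) / Mf (p * ln y).
Proof. intros p y t Hy Ht. unfold gy, Phi.
  destruct (Rle_dec (t*y) 0). nra. destruct (Rle_dec y 0). lra.
  unfold Rpower. rewrite ln_mult by lra.
  replace (p * (ln t + ln y)) with (p * ln t + p * ln y) by ring. rewrite exp_plus.
  pose proof (exp_pos (p * ln y)). pose proof (M_ge1 (p * ln y)). field. split; lra. Qed.

Lemma gy_0 : forall p y, gy p y 0 = 0.
Proof. intros. unfold gy, Phi. rewrite Rmult_0_l. destruct Rle_dec. unfold Rdiv; ring. lra. Qed.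



Lemma gy_le : forall p y t, 0 <= p -> 0 < y -> 0 < t <= 1 -> gy p y t <= Rpower t p.
Proof. intros p y t Hp Hy Ht. rewrite gy_eq by lra. unfold Rpower.
  pose proof (ln_le0 t Ht). pose proof (exp_pos (p * ln t)).
  assert (Mf (p * ln t + p * ln y) <= Mf (p * ln y)) by (apply M_mono; nra).
  pose proof (M_ge1 (p * ln y)).
  apply Rmult_le_reg_r with (Mf (p * ln y)). lra.
  unfold Rdiv. rewrite Rmult_assoc, Rinv_l by lra. nra. Qed.

Lemma le_div : forall a b X, 0 < X -> a * X <= b -> a <= b / X.
Proof. intros a b X HX H. apply Rmult_le_reg_r with X; auto.
  unfold Rdiv; rewrite Rmult_assoc, Rinv_l by lra; lra. Qed.
Lemma div_le : forall a b X, 0 < X -> b <= a * X -> b / X <= a.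
Proof. intros a b X HX H. apply Rmult_le_reg_r with X; auto.
  unfold Rdiv; rewrite Rmult_assoc, Rinv_l by lra; lra. Qed.

Lemma we_bound : forall w, w <= 0 -> exp w * w >= -1.
Proof. intros w Hw. pose proof (exp_ineq1_le (-w)). pose proof (exp_pos w).
  assert (exp w * exp (-w) = 1) by (rewrite <- exp_plus; replace (w + - w) with 0 by ring; apply exp_0).
  nra. Qed.

Lemma Ms_eq : forall (j : nat) (s : R), sig (S j) <= s <= sig (S (S j)) -> Mf s = Lf j * (INR j + 2) * (1 + (s - sig (S j))).
Proof. intros j s Hs. set (d := s - sig (S j)). rewrite (M_seg (S j) s Hs). unfold line, d. simpl. ring. Qed.

Lemma ratio_low1 : forall (j : nat) (s w : R), sig (S j) <= s <= sig (S (S j)) -> Mf (s + w) / Mf s >= (1 + (s - sig (S j)) + w) / (1 + (s - sig (S j))).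
Proof. intros j s w Hs. set (d := s - sig (S j)). pose proof (M_ge_line (S j) (s + w)). rewrite (Ms_eq j s Hs). fold d. unfold line in H. simpl Lf in H.
  pose proof (Lf_ge1 j). pose proof (pos_INR j). assert (0 <= d) by (unfold d; lra).
  assert (Hpos : 0 < Lf j * (INR j + 2) * (1 + d)) by (apply Rmult_lt_0_compat; [apply Rmult_lt_0_compat|]; lra).
  assert (Lf (S j) = Lf j * (INR j + 2)) by reflexivity.
  replace (1 + (s + w) - sig (S j)) with (1 + d + w) in H by (unfold d; ring).
  apply Rle_ge. apply le_div. lra.
  replace ((1 + d + w) / (1 + d) * (Lf j * (INR j + 2) * (1 + d)))
      with (Lf j * (INR j + 2) * (1 + d + w)) by (field; lra). lra. Qed.

Lemma ratio_low2 : forall (j : nat) (s w : R), sig (S j) <= s <= sig (S (S j)) -> w <= 0 -> Mf (s + w) / Mf s >= / (1 + (s - sig (S j))) + w / (INR j + 2).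
Proof. intros j s w Hs Hw. set (d := s - sig (S j)). pose proof (M_ge_line j (s + w)). rewrite (Ms_eq j s Hs). fold d. unfold line in H.
  pose proof (Lf_ge1 j). pose proof (pos_INR j). assert (0 <= d) by (unfold d; lra).
  assert (Hpos : 0 < Lf j * (INR j + 2) * (1 + d)) by (apply Rmult_lt_0_compat; [apply Rmult_lt_0_compat|]; lra).
  assert (E : sig (S j) = sig j + INR j + 1) by reflexivity.
  replace (1 + (s + w) - sig j) with (INR j + 2 + d + w) in H by (unfold d; rewrite E; ring).
  assert (Mf (s + w) / (Lf j * (INR j + 2) * (1 + d)) >= (INR j + 2 + d + w) / ((INR j + 2) * (1 + d))).
  { apply Rle_ge. apply le_div. lra.
    replace ((INR j + 2 + d + w) / ((INR j + 2) * (1 + d)) * (Lf j * (INR j + 2) * (1 + d)))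
      with (Lf j * (INR j + 2 + d + w)) by (field; lra). lra. }
  assert ((INR j + 2 + d + w) / ((INR j + 2) * (1 + d)) - (/ (1 + d) + w / (INR j + 2))
     = d * (1 - w) / ((INR j + 2) * (1 + d))) by (field; lra).
  assert (0 <= d * (1 - w) / ((INR j + 2) * (1 + d))).
  { unfold Rdiv. apply Rmult_le_pos. nra. left. apply Rinv_0_lt_compat. nra. }
  lra. Qed.

Lemma ratio_pos : forall s w, 0 < Mf (s + w) / Mf s.
Proof. intros s w. pose proof (M_ge1 (s+w)). pose proof (M_ge1 s). unfold Rdiv.
  apply Rmult_lt_0_compat. lra. apply Rinv_0_lt_compat; lra. Qed.

Lemma ratio_up : forall (j : nat) (s w : R), sig (S j) <= s <= sig (S (S j)) -> s + w <= sig (S j) -> Mf (s + w) / Mf s <= / (1 + (s - sig (S j))).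
Proof. intros j s w Hs H. set (d := s - sig (S j)). pose proof (M_mono _ _ H).
  rewrite (M_seg (S j) (sig (S j))) in H0 by (split; [lra| apply sig_mono; lia]).
  rewrite (Ms_eq j s Hs). fold d. unfold line in H0. simpl Lf in H0.
  pose proof (Lf_ge1 j). pose proof (pos_INR j). assert (0 <= d) by (unfold d; lra).
  assert (Hpos : 0 < Lf j * (INR j + 2) * (1 + d)) by (apply Rmult_lt_0_compat; [apply Rmult_lt_0_compat|]; lra).
  apply div_le. lra.
  replace (/ (1 + d) * (Lf j * (INR j + 2) * (1 + d))) with (Lf j * (INR j + 2)) by (field; lra).
  lra. Qed.

Lemma ratio_exact : forall (j : nat) (s w : R), sig (S j) <= s <= sig (S (S j)) -> w <= 0 -> sig (S j) <= s + w -> Mf (s + w) / Mf s = (1 + (s - sig (S j)) + w) / (1 + (s - sig (S j))).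
Proof. intros j s w Hs Hw H. set (d := s - sig (S j)). rewrite (M_seg (S j) (s + w)) by lra. rewrite (Ms_eq j s Hs). fold d. unfold line. simpl Lf.
  pose proof (Lf_ge1 j). pose proof (pos_INR j). assert (0 <= d) by (unfold d; lra).
  assert (Hpos : 0 < Lf j * (INR j + 2) * (1 + d)) by (apply Rmult_lt_0_compat; [apply Rmult_lt_0_compat|]; lra).
  unfold d. field. split; nra. Qed.



Lemma inv_small : forall eta x, 0 < eta -> / eta < x -> / x < eta.
Proof. intros eta x He H. assert (0 < x) by (pose proof (Rinv_0_lt_compat eta He); lra).
  assert (1 < eta * x). { replace 1 with (eta * / eta) by (field; lra). apply Rmult_lt_compat_l; lra. }
  apply Rmult_lt_reg_r with x. lra. rewrite Rinv_l by lra. lra. Qed.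

Lemma gy_form : forall p y t, 0 < y -> 0 < t ->
  gy p y t = exp (p * ln t) * (Mf (p * ln y + p * ln t) / Mf (p * ln y)).
Proof. intros. rewrite gy_eq by auto. rewrite (Rplus_comm (p * ln y)). unfold Rdiv; ring. Qed.

Lemma seg_big : forall J s, sig (S J) < s -> exists j, (J <= j)%nat /\ sig (S j) <= s <= sig (S (S j)).
Proof. intros J s H. assert (0 <= sig (S J)) by (pose proof (sig_ge (S J)); pose proof (pos_INR (S J)); lra).
  destruct (seg_exists s ltac:(lra)) as [k Hk]. destruct k.
  - assert (sig 1 <= sig (S J)) by (apply sig_mono; lia). lra.
  - exists k. split; auto. destruct (le_lt_dec J k); auto.
    assert (sig (S (S k)) <= sig (S J)) by (apply sig_mono; lia). lra. Qed.

Lemma key_g : forall p, 1 < p -> forall eta, 0 < eta -> exists A, 0 < A /\ forall y, A < y ->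
  exists D, 0 <= D /\ forall t, 0 < t <= 1 ->
    Rpower t p / (1 + D) - eta <= gy p y t /\ Rpower t p * ell p D t <= gy p y t.
Proof. intros p Hp eta He.
  set (J := Z.to_nat (up (/ eta))).
  assert (HJ : / eta < INR J). { pose proof (archimed (/eta)) as [A1 _]. pose proof (IZR_le_INR_to_nat (up (/ eta))). unfold J; lra. }
  exists (exp (sig (S J) / p)). split. apply exp_pos. intros y Hy.
  assert (Hy0 : 0 < y) by (pose proof (exp_pos (sig (S J) / p)); lra).
  assert (Hs : sig (S J) < p * ln y).
  { pose proof (ln_increasing _ _ (exp_pos _) Hy). rewrite ln_exp in H.
    apply Rmult_lt_compat_l with (r := p) in H; [|lra]. replace (p * (sig (S J) / p)) with (sig (S J)) in H by (field; lra). lra. }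
  destruct (seg_big J _ Hs) as [j [Hjj Hseg]].
  exists (p * ln y - sig (S j)). split. lra. intros t Ht.
  assert (Hw : p * ln t <= 0) by (pose proof (ln_le0 t Ht); nra).
  rewrite gy_form by lra. unfold Rpower, ell.
  set (w := p * ln t) in *. set (s := p * ln y) in *.
  pose proof (ratio_low1 j s w Hseg). pose proof (ratio_low2 j s w Hseg Hw). pose proof (ratio_pos s w).
  set (R := Mf (s + w) / Mf s) in *. set (d := s - sig (S j)) in *.
  pose proof (exp_pos w). assert (0 <= d) by (unfold d; lra).
  assert (HjJ : INR J <= INR j) by (apply le_INR; auto).
  assert (Hinv : / (INR j + 2) < eta) by (apply inv_small; auto; lra).
  pose proof (we_bound w Hw). pose proof (pos_INR j).
  split.
  - assert (exp w * R >= exp w * (/ (1 + d) + w / (INR j + 2))) by (apply Rle_ge, Rmult_le_compat_l; lra).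
    assert (exp w * (w / (INR j + 2)) >= - / (INR j + 2)).
    { replace (exp w * (w / (INR j + 2))) with ((exp w * w) * / (INR j + 2)) by (unfold Rdiv; ring).
      pose proof (Rinv_0_lt_compat (INR j + 2) ltac:(lra)). nra. }
    unfold Rdiv at 1. lra.
  - apply Rmult_le_compat_l. lra. apply Rmax_lub. lra.
    replace (1 + w / (1 + d)) with ((1 + d + w) / (1 + d)) by (field; lra). lra. Qed.

Definition Hn (p : R) (n : nat) (t : R) : R :=
  if Rle_dec t 0 then 0 else Rpower t p * Rmax (/ (1 + INR n)) (1 + p * ln t / (1 + INR n)).

Lemma Hn_close : forall p n j, 1 < p -> (n <= S (S j))%nat ->
  forall x, 0 <= x <= 1 ->
  Rabs (Hn p n x - gy p (exp ((sig (S j) + INR n) / p)) x) <= / (INR j + 2).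
Proof. intros p n j Hp Hnj x Hx.
  pose proof (pos_INR j). assert (0 < / (INR j + 2)) by (apply Rinv_0_lt_compat; lra).
  destruct (Req_dec x 0).
  { subst. rewrite gy_0. unfold Hn. destruct Rle_dec; [|lra]. rewrite Rminus_0_r, Rabs_R0. lra. }
  set (y := exp ((sig (S j) + INR n) / p)).
  assert (Hy : p * ln y = sig (S j) + INR n) by (unfold y; rewrite ln_exp; field; lra).
  assert (Hseg : sig (S j) <= p * ln y <= sig (S (S j))).
  { rewrite Hy. pose proof (pos_INR n). split. lra.
    change (sig (S (S j))) with (sig (S j) + INR (S j) + 1). rewrite S_INR.
    apply le_INR in Hnj. rewrite !S_INR in Hnj. lra. }
  rewrite gy_form by (unfold y; try apply exp_pos; lra).
  unfold Hn. destruct Rle_dec. lra. unfold Rpower.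
  assert (Hw : p * ln x <= 0) by (pose proof (ln_le0 x ltac:(lra)); nra).
  set (w := p * ln x) in *. set (s := p * ln y) in *.
  pose proof (ratio_low2 j s w Hseg Hw). pose proof (ratio_pos s w).
  set (R := Mf (s + w) / Mf s) in *.
  assert (Hd : s - sig (S j) = INR n) by lra. rewrite Hd in H2.
  pose proof (exp_pos w). pose proof (pos_INR n).
  destruct (Rle_dec (sig (S j)) (s + w)).
  - pose proof (ratio_exact j s w Hseg Hw r) as HE. fold R in HE. rewrite Hd in HE.
    rewrite Rmax_right.
    + replace (1 + w / (1 + INR n)) with R by (rewrite HE; field; lra).
      rewrite Rminus_diag, Rabs_R0. lra.
    + assert (1 + w / (1 + INR n) - / (1 + INR n) = (INR n + w) * / (1 + INR n)) by (field; lra).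
      assert (0 <= (INR n + w) * / (1 + INR n)).
      { apply Rmult_le_pos. lra. left; apply Rinv_0_lt_compat; lra. } lra.
  - pose proof (ratio_up j s w Hseg ltac:(lra)) as HU. fold R in HU. rewrite Hd in HU.
    rewrite Rmax_left.
    + assert (exp w * R <= exp w * / (1 + INR n)) by (apply Rmult_le_compat_l; lra).
      assert (exp w * R >= exp w * (/ (1 + INR n) + w / (INR j + 2))) by (apply Rle_ge, Rmult_le_compat_l; lra).
      pose proof (we_bound w Hw).
      assert (exp w * (w / (INR j + 2)) >= - / (INR j + 2)).
      { replace (exp w * (w / (INR j + 2))) with ((exp w * w) * / (INR j + 2)) by (unfold Rdiv; ring). nra. }
      apply Rabs_le. lra.
    + assert (1 + w / (1 + INR n) - / (1 + INR n) = (INR n + w) * / (1 + INR n)) by (field; lra).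
      assert ((INR n + w) * / (1 + INR n) <= 0).
      { pose proof (Rinv_0_lt_compat (1 + INR n) ltac:(lra)). nra. } lra. Qed.


Lemma exp_le : forall a b, a <= b -> exp a <= exp b.
Proof. intros a b H. destruct (Req_dec a b). subst; lra. left; apply exp_increasing; lra. Qed.

Lemma cont_eps : forall f x, continuity_pt f x -> forall eps, 0 < eps ->
  exists d, 0 < d /\ forall y, Rabs (y - x) < d -> Rabs (f y - f x) < eps.
Proof. intros f x Hc eps He. destruct (Hc eps He) as [a [Ha Hf]]. exists a. split. lra.
  intros y Hy. destruct (Req_dec y x). subst. rewrite Rminus_diag, Rabs_R0. lra.
  apply (Hf y). split. split. exact I. auto. exact Hy. Qed.

Lemma Rmax_lip : forall a b c, Rabs (Rmax a b - Rmax a c) <= Rabs (b - c).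
Proof. intros. unfold Rmax; repeat destruct Rle_dec; unfold Rabs; repeat destruct Rcase_abs; lra. Qed.

Lemma P_le1 : forall p t, 0 <= p -> 0 < t <= 1 -> 0 < Rpower t p <= 1.
Proof. intros p t Hp Ht. unfold Rpower. split. apply exp_pos. rewrite <- exp_0. apply exp_le.
  pose proof (ln_le0 t Ht). nra. Qed.

Lemma P_le_t : forall p t, 1 <= p -> 0 < t <= 1 -> Rpower t p <= t.
Proof. intros p t Hp Ht. unfold Rpower. rewrite <- (exp_ln t) at 2 by lra. apply exp_le.
  pose proof (ln_le0 t Ht). nra. Qed.

Lemma Hn_bounds : forall p n t, 1 < p -> 0 < t <= 1 ->
  0 < Rmax (/ (1 + INR n)) (1 + p * ln t / (1 + INR n)) <= 1.
Proof. intros p n t Hp Ht. pose proof (pos_INR n).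
  assert (0 < / (1 + INR n) <= 1).
  { assert (/ (1 + INR n) <= / 1) by (apply Rinv_le_contravar; lra). rewrite Rinv_1 in H0.
    split. apply Rinv_0_lt_compat; lra. auto. }
  split. eapply Rlt_le_trans; [|apply Rmax_l]. lra.
  apply Rmax_lub. lra.
  assert (p * ln t / (1 + INR n) <= 0).
  { pose proof (ln_le0 t Ht). unfold Rdiv. pose proof (Rinv_0_lt_compat (1 + INR n) ltac:(lra)).
    assert (0 <= (- ln t) * p * / (1 + INR n)) by (apply Rmult_le_pos; [apply Rmult_le_pos|]; lra). lra. }
  lra. Qed.

Lemma Hn_cont : forall p n, 1 < p -> cont01 (Hn p n).
Proof. intros p n Hp x Hx eps He.
  destruct (Req_dec x 0).
  - subst. exists eps. split. auto. intros y Hy Hyx.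
    unfold Hn at 2. destruct (Rle_dec 0 0); [|lra]. rewrite Rminus_0_r.
    unfold Hn. destruct (Rle_dec y 0). rewrite Rabs_R0; lra.
    assert (Hy' : 0 < y <= 1) by lra.
    pose proof (Hn_bounds p n y Hp Hy'). pose proof (P_le1 p y ltac:(lra) Hy'). pose proof (P_le_t p y ltac:(lra) Hy').
    rewrite Rminus_0_r in Hyx. rewrite Rabs_right in Hyx by lra.
    rewrite Rabs_right by nra. nra.
  - assert (Hx0 : 0 < x) by lra.
    assert (CP : continuity_pt (fun t => Rpower t p) x).
    { apply derivable_continuous_pt. exists (p * Rpower x (p - 1)). apply derivable_pt_lim_power. auto. }
    assert (CL : continuity_pt ln x).
    { apply derivable_continuous_pt. exists (/ x). apply derivable_pt_lim_ln. auto. }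
    destruct (cont_eps _ _ CP (eps/2) ltac:(lra)) as [d1 [Hd1 H1]].
    destruct (cont_eps _ _ CL (eps/(2*p)) ltac:(apply Rdiv_lt_0_compat; lra)) as [d2 [Hd2 H2]].
    exists (Rmin d1 (Rmin d2 x)). split. repeat apply Rmin_pos; lra.
    intros y Hy Hyx.
    pose proof (Rmin_l d1 (Rmin d2 x)). pose proof (Rmin_r d1 (Rmin d2 x)).
    pose proof (Rmin_l d2 x). pose proof (Rmin_r d2 x).
    assert (Hy0 : 0 < y). { unfold Rabs in Hyx; destruct Rcase_abs; lra. }
    specialize (H1 y ltac:(lra)). specialize (H2 y ltac:(lra)).
    unfold Hn. destruct (Rle_dec y 0); [lra|]. destruct (Rle_dec x 0); [lra|].
    set (a := / (1 + INR n)).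
    set (My := Rmax a (1 + p * ln y / (1 + INR n))). set (Mx := Rmax a (1 + p * ln x / (1 + INR n))).
    pose proof (Hn_bounds p n y Hp ltac:(lra)) as HBy. pose proof (Hn_bounds p n x Hp ltac:(lra)) as HBx.
    fold a My Mx in HBy, HBx.
    pose proof (P_le1 p x ltac:(lra) ltac:(lra)).
    assert (HM : Rabs (My - Mx) < eps / 2).
    { eapply Rle_lt_trans. apply Rmax_lip.
      replace (1 + p * ln y / (1 + INR n) - (1 + p * ln x / (1 + INR n))) with ((p / (1 + INR n)) * (ln y - ln x)) by (field; pose proof (pos_INR n); lra).
      rewrite Rabs_mult. rewrite (Rabs_right (p / (1 + INR n))) by (apply Rle_ge, Rlt_le, Rdiv_lt_0_compat; pose proof (pos_INR n); lra).
      assert (p / (1 + INR n) <= p).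
      { apply div_le. pose proof (pos_INR n); lra. pose proof (pos_INR n); nra. }
      assert (Rabs (ln y - ln x) * p < eps / 2).
      { apply Rmult_lt_reg_r with (/ p). apply Rinv_0_lt_compat; lra.
        replace (Rabs (ln y - ln x) * p * / p) with (Rabs (ln y - ln x)) by (field; lra).
        replace (eps / 2 * / p) with (eps / (2 * p)) by (field; lra). auto. }
      pose proof (Rabs_pos (ln y - ln x)). nra. }
    replace (Rpower y p * My - Rpower x p * Mx) with ((Rpower y p - Rpower x p) * My + Rpower x p * (My - Mx)) by ring.
    eapply Rle_lt_trans. apply Rabs_triang. rewrite !Rabs_mult.
    rewrite (Rabs_right My) by lra. rewrite (Rabs_right (Rpower x p)) by lra.
    pose proof (Rabs_pos (Rpower y p - Rpower x p)). pose proof (Rabs_pos (My - Mx)). nra. Qed.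


Lemma abs_between : forall a b e, Rabs (a - b) <= e -> b - e <= a <= b + e.
Proof. intros a b e H. unfold Rabs in H. destruct Rcase_abs; lra. Qed.

Lemma ell_nonneg : forall p D t, 0 <= ell p D t.
Proof. intros; apply Rmax_l. Qed.

Lemma ell_mono : forall p D D' t, 0 < p -> 0 <= D <= D' -> 0 < t <= 1 -> ell p D t <= ell p D' t.
Proof. intros p D D' t Hp HD Ht. unfold ell. apply Rle_max_compat_l.
  pose proof (ln_le0 t Ht).
  assert (/ (1 + D') <= / (1 + D)) by (apply Rinv_le_contravar; lra).
  assert (0 <= (- (p * ln t)) * (/ (1 + D) - / (1 + D'))) by (apply Rmult_le_pos; nra).
  unfold Rdiv. nra. Qed.

Lemma div_anti : forall a D D', 0 <= a -> 0 <= D <= D' -> a / (1 + D') <= a / (1 + D).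
Proof. intros. unfold Rdiv. apply Rmult_le_compat_l. auto. apply Rinv_le_contravar; lra. Qed.

Definition RE (p : R) (K : R -> R) : Prop :=
  (forall t, 0 < t <= 1 -> K t <= Rpower t p) /\
  forall D, 0 <= D -> (forall t, 0 < t <= 1 -> Rpower t p / (1 + D) <= K t) \/
                     (forall t, 0 < t <= 1 -> Rpower t p * ell p D t <= K t).

Lemma EF_RE : forall p K, 1 < p -> E_F (Phi p) K -> RE p K.
Proof. intros p K Hp HK. split.
  - intros t Ht. apply Rle_plus_epsilon. intros eps He.
    destruct (HK 1 Rlt_0_1) as [_ Hc]. destruct (Hc eps He) as [g [[y [Hy Eg]] Hg]]. subst g.
    pose proof (Hg t ltac:(lra)) as H. apply abs_between in H.
    pose proof (gy_le p y t ltac:(lra) ltac:(lra) Ht). unfold gy in H0. lra.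
  - intros D HD.
    destruct (classic (forall eta, 0 < eta -> forall eps, 0 < eps -> exists y, 0 < y /\
        (forall x, 0 <= x <= 1 -> Rabs (K x - gy p y x) <= eps) /\
        (forall t, 0 < t <= 1 -> Rpower t p / (1 + D) - eta <= gy p y t))) as [Q|NQ].
    + left. intros t Ht. apply Rle_plus_epsilon. intros e He.
      destruct (Q (e/2) ltac:(lra) (e/2) ltac:(lra)) as [y [Hy [Hc Hl]]].
      pose proof (Hc t ltac:(lra)) as H. apply abs_between in H. pose proof (Hl t Ht). lra.
    + right. apply not_all_ex_not in NQ as [eta NQ]. apply imply_to_and in NQ as [Heta NQ].
      apply not_all_ex_not in NQ as [eps0 NQ]. apply imply_to_and in NQ as [Heps0 NQ].
      destruct (key_g p Hp eta Heta) as [A [HA HAk]].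
      intros t Ht. apply Rle_plus_epsilon. intros e He.
      set (e' := Rmin e eps0). assert (He' : 0 < e') by (apply Rmin_pos; lra).
      pose proof (Rmin_l e eps0). pose proof (Rmin_r e eps0). fold e' in H, H0.
      destruct (HK A HA) as [_ Hc]. destruct (Hc e' He') as [g [[y [Hy Eg]] Hg]]. subst g.
      destruct (HAk y Hy) as [Dy [HDy HDk]].
      destruct (Rle_dec Dy D).
      * exfalso. apply NQ. exists y. split. lra. split.
        { intros x Hx. pose proof (Hg x Hx). unfold gy. lra. }
        { intros t' Ht'. destruct (HDk t' Ht') as [H1 _].
          pose proof (div_anti (Rpower t' p) Dy D ltac:(left; apply exp_pos) ltac:(lra)). lra. }
      * destruct (HDk t Ht) as [_ H2].
        pose proof (ell_mono p D Dy t ltac:(lra) ltac:(lra) Ht) as EM.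
        pose proof (exp_pos (p * ln t)) as EP. change (exp (p * ln t)) with (Rpower t p) in EP.
        assert (Rpower t p * ell p D t <= Rpower t p * ell p Dy t) by (apply Rmult_le_compat_l; lra).
        pose proof (Hg t ltac:(lra)) as H6. apply abs_between in H6. unfold gy in H2. lra. Qed.

Definition Wl (l : list (R * (R -> R))) := fold_right (fun c acc => fst c + acc) 0 l.
Definition hl (l : list (R * (R -> R))) (x : R) := fold_right (fun c acc => fst c * snd c x + acc) 0 l.

Lemma conv_RE : forall p l, 0 < p -> Forall (fun c => 0 <= fst c /\ RE p (snd c)) l -> forall D, 0 <= D ->
  exists m, 0 <= m <= Wl l /\ forall t, 0 < t <= 1 ->
   Rpower t p * (m / (1 + D) + (Wl l - m) * ell p D t) <= hl l t /\ hl l t <= Wl l * Rpower t p.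
Proof. intros p l Hp HF D HD. induction l as [|[a K] l IH].
  - exists 0. unfold Wl, hl; simpl. split. lra. intros t Ht. split. unfold Rdiv; lra. lra.
  - inversion HF as [|? ? [Ha [HKu HKl]] HF']; subst. simpl in Ha.
    destruct (IH HF') as [m [Hm Hb]].
    destruct (HKl D HD) as [L1|L2].
    + exists (a + m). unfold Wl, hl in *; simpl in *. split. lra.
      intros t Ht. destruct (Hb t Ht) as [B1 B2]. pose proof (L1 t Ht). pose proof (HKu t Ht).
      pose proof (exp_pos (p * ln t)) as EP. change (exp (p * ln t)) with (Rpower t p) in EP.
      split.
      * assert (a * (Rpower t p / (1 + D)) <= a * K t) by (apply Rmult_le_compat_l; lra).
        replace (Rpower t p * ((a + m) / (1 + D) + (a + fold_right (fun c acc => fst c + acc) 0 l - (a + m)) * ell p D t))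
          with (a * (Rpower t p / (1 + D)) + Rpower t p * (m / (1 + D) + (fold_right (fun c acc => fst c + acc) 0 l - m) * ell p D t)) by (field; lra).
        lra.
      * assert (a * K t <= a * Rpower t p) by (apply Rmult_le_compat_l; lra). nra.
    + exists m. unfold Wl, hl in *; simpl in *. split. lra.
      intros t Ht. destruct (Hb t Ht) as [B1 B2]. pose proof (L2 t Ht). pose proof (HKu t Ht).
      pose proof (exp_pos (p * ln t)) as EP. change (exp (p * ln t)) with (Rpower t p) in EP.
      split.
      * assert (a * (Rpower t p * ell p D t) <= a * K t) by (apply Rmult_le_compat_l; lra).
        replace (Rpower t p * (m / (1 + D) + (a + fold_right (fun c acc => fst c + acc) 0 l - m) * ell p D t))
          with (a * (Rpower t p * ell p D t) + Rpower t p * (m / (1 + D) + (fold_right (fun c acc => fst c + acc) 0 l - m) * ell p D t)) by ring.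
        lra.
      * assert (a * K t <= a * Rpower t p) by (apply Rmult_le_compat_l; lra). nra. Qed.

Lemma conv_info : forall p h, 1 < p -> conv_hull (E_F (Phi p)) h -> forall D, 0 <= D ->
  exists m, 0 <= m <= 1 /\ forall t, 0 < t <= 1 ->
   Rpower t p * (m / (1 + D) + (1 - m) * ell p D t) <= h t /\ h t <= Rpower t p.
Proof. intros p h Hp [l [HF [HW Hh]]] D HD.
  assert (HF' : Forall (fun c => 0 <= fst c /\ RE p (snd c)) l).
  { eapply Forall_impl; [|exact HF]. intros [a K] [Ha HK]. split; auto. apply EF_RE; auto. }
  destruct (conv_RE p l ltac:(lra) HF' D HD) as [m [Hm Hb]]. unfold Wl in *. rewrite HW in *.
  exists m. split. auto. intros t Ht. rewrite Hh. destruct (Hb t Ht). unfold hl in *. lra. Qed.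

Lemma CF_bound : forall p H, 1 < p -> C_F (Phi p) H -> exists C, 0 < C /\
  forall t, 0 < t <= 1 -> / C * Rpower t p <= H t /\ H t <= C * Rpower t p.
Proof. intros p H Hp [_ Hc].
  assert (Up : forall t, 0 < t <= 1 -> H t <= Rpower t p).
  { intros t Ht. apply Rle_plus_epsilon. intros eps He. destruct (Hc eps He) as [h [Hh Hd]].
    destruct (conv_info p h Hp Hh 0 ltac:(lra)) as [m [_ Hb]]. destruct (Hb t Ht).
    pose proof (Hd t ltac:(lra)) as X. apply abs_between in X. lra. }
  assert (Ppos : forall t, 0 < Rpower t p) by (intros; apply exp_pos).
  destruct (classic (exists D, 0 <= D /\ forall eps, 0 < eps -> exists h, conv_hull (E_F (Phi p)) h /\
      (forall x, 0 <= x <= 1 -> Rabs (H x - h x) <= eps) /\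
      (forall t, 0 < t <= 1 -> Rpower t p / (2 * (1 + D)) <= h t))) as [[D [HD Q]]|NQ].
  - exists (2 * (1 + D)). split. lra. intros t Ht. split.
    + apply Rle_plus_epsilon. intros e He. destruct (Q e He) as [h [_ [Hd Hl]]].
      pose proof (Hd t ltac:(lra)) as X. apply abs_between in X. pose proof (Hl t Ht).
      replace (/ (2 * (1 + D)) * Rpower t p) with (Rpower t p / (2 * (1 + D))) by (field; lra). lra.
    + pose proof (Up t Ht). pose proof (Ppos t). nra.
  - exists 4. split. lra. intros t Ht. split.
    + set (D := - 2 * (p * ln t)).
      assert (HD : 0 <= D) by (pose proof (ln_le0 t Ht); unfold D; nra).
      assert (Hell : 1/2 <= ell p D t).
      { unfold ell. eapply Rle_trans; [|apply Rmax_r]. pose proof (ln_le0 t Ht).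
        assert (0 <= - (p * ln t)) by nra.
        replace (1 + p * ln t / (1 + D)) with ((1 - p * ln t) / (1 - 2 * (p * ln t))) by (unfold D; field; lra).
        apply le_div. lra. lra. }
      assert (Main : Rpower t p * ell p D t / 2 <= H t).
      { apply Rle_plus_epsilon. intros e He.
        assert (NQD : ~ (forall eps, 0 < eps -> exists h, conv_hull (E_F (Phi p)) h /\
            (forall x, 0 <= x <= 1 -> Rabs (H x - h x) <= eps) /\
            (forall t, 0 < t <= 1 -> Rpower t p / (2 * (1 + D)) <= h t))) by (intro; apply NQ; eauto).
        apply not_all_ex_not in NQD as [eps0 NQD]. apply imply_to_and in NQD as [Heps0 NQD].
        set (e' := Rmin e eps0). assert (He' : 0 < e') by (apply Rmin_pos; lra).
        pose proof (Rmin_l e eps0). pose proof (Rmin_r e eps0). fold e' in H0, H1.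
        destruct (Hc e' He') as [h [Hh Hd]].
        destruct (conv_info p h Hp Hh D HD) as [m [Hm Hb]].
        destruct (Rle_dec (1/2) m).
        - exfalso. apply NQD. exists h. split. auto. split.
          { intros x Hx. pose proof (Hd x Hx). lra. }
          { intros t' Ht'. destruct (Hb t' Ht') as [B _]. pose proof (ell_nonneg p D t'). pose proof (Ppos t').
            assert (Rpower t' p * ((1 - m) * ell p D t') >= 0) by (apply Rle_ge, Rmult_le_pos; [lra|apply Rmult_le_pos; lra]).
            assert (Rpower t' p * (m / (1 + D)) >= Rpower t' p / (2 * (1 + D))).
            { apply Rle_ge. replace (Rpower t' p / (2 * (1 + D))) with (Rpower t' p * ((1/2) / (1 + D))) by (field; lra).
              apply Rmult_le_compat_l. lra. unfold Rdiv. apply Rmult_le_compat_r. left; apply Rinv_0_lt_compat; lra. lra. }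
            lra. }
        - destruct (Hb t Ht) as [B _]. pose proof (ell_nonneg p D t). pose proof (Ppos t).
          assert (Rpower t p * (m / (1 + D)) >= 0).
          { apply Rle_ge, Rmult_le_pos. lra. unfold Rdiv; apply Rmult_le_pos. lra. left; apply Rinv_0_lt_compat; lra. }
          assert (Rpower t p * ((1 - m) * ell p D t) >= Rpower t p * ell p D t / 2).
          { apply Rle_ge. replace (Rpower t p * ell p D t / 2) with (Rpower t p * ((1/2) * ell p D t)) by field.
            apply Rmult_le_compat_l. lra. apply Rmult_le_compat_r; lra. }
          pose proof (Hd t ltac:(lra)) as X. apply abs_between in X. nra. }
      pose proof (Ppos t). assert (Rpower t p * (1/2) <= Rpower t p * ell p D t) by (apply Rmult_le_compat_l; lra).
      lra.
    + pose proof (Up t Ht). pose proof (Ppos t). lra. Qed.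


Lemma Hn_EF : forall p n, 1 < p -> E_F (Phi p) (Hn p n).
Proof. intros p n Hp A HA. split. apply Hn_cont; auto.
  intros eps He.
  set (j := (n + Z.to_nat (up (Rabs (p * ln A))) + Z.to_nat (up (/ eps)))%nat).
  pose proof (archimed (Rabs (p * ln A))) as [X1 _]. pose proof (archimed (/ eps)) as [X2 _].
  pose proof (IZR_le_INR_to_nat (up (Rabs (p * ln A)))). pose proof (IZR_le_INR_to_nat (up (/ eps))).
  assert (Hj1 : INR (Z.to_nat (up (Rabs (p * ln A)))) <= INR j) by (apply le_INR; unfold j; lia).
  assert (Hj2 : INR (Z.to_nat (up (/ eps))) <= INR j) by (apply le_INR; unfold j; lia).
  exists (gy p (exp ((sig (S j) + INR n) / p))). split.
  - exists (exp ((sig (S j) + INR n) / p)). split; [|reflexivity].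
    rewrite <- (exp_ln A) by auto. apply exp_increasing.
    pose proof (sig_ge (S j)). rewrite S_INR in H1. pose proof (Rle_abs (p * ln A)). pose proof (pos_INR n).
    apply Rmult_lt_reg_l with p. lra. replace (p * ((sig (S j) + INR n) / p)) with (sig (S j) + INR n) by (field; lra).
    lra.
  - intros x Hx. eapply Rle_trans. apply Hn_close; auto. unfold j; lia.
    left. apply inv_small; auto. pose proof (pos_INR j). lra. Qed.

Theorem mainTheorem2 : forall p : R, 1 < p ->
  exists Phi : R -> R, Orlicz Phi /\
    fcong (C_F Phi) (fun t => Rpower t p) /\
    ~ fequiv (E_F Phi) (fun t => Rpower t p).
Proof. intros p Hp. exists (Phi p). split. apply Phi_orlicz; auto. split.
  - intros H HH. apply CF_bound; auto.
  - intros [C [HC HE]].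
    set (n := Z.to_nat (up C)).
    assert (Hn1 : C < 1 + INR n). { pose proof (archimed C) as [X _]. pose proof (IZR_le_INR_to_nat (up C)). unfold n; lra. }
    set (t := exp (- INR n / p)).
    assert (Ht : 0 < t <= 1). { split. apply exp_pos. rewrite <- exp_0. apply exp_le.
      pose proof (pos_INR n). unfold Rdiv. pose proof (Rinv_0_lt_compat p ltac:(lra)). nra. }
    destruct (HE (Hn p n) (Hn_EF p n Hp) t Ht) as [L _].
    unfold Hn in L. destruct Rle_dec. lra.
    assert (Hw : p * ln t = - INR n) by (unfold t; rewrite ln_exp; field; lra).
    rewrite Hw in L. pose proof (pos_INR n).
    rewrite Rmax_left in L.
    2: { replace (1 + - INR n / (1 + INR n)) with (/ (1 + INR n)) by (field; lra). lra. }
    pose proof (exp_pos (p * ln t)). change (exp (p * ln t)) with (Rpower t p) in H0.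
    assert (/ C <= / (1 + INR n)). { apply Rmult_le_reg_r with (Rpower t p). auto. lra. }
    assert (/ (1 + INR n) < / C) by (apply Rinv_lt_contravar; nra).
    lra. Qed.
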